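(* Let $K\ge 2$ and let $\mathbf{Q}^\star,\mathbf{Q}_r,\mathbf{z}^\star,\mathbf{z}_r$ be as in the context. Then $$\left|\mathbf{z}^{\star\dagger}\mathbf{Q}^\star\mathbf{z}^\star-\mathbf{z}_r^\dagger\mathbf{Q}^\star\mathbf{z}_r\right|\le 2n\,\|\mathbf{Q}^\star-\mathbf{Q}_r\|_2.$$
   Context: $\mathcal{A}_K=\{\exp(2\pi\mathrm{i}k/K):k=0,\dots,K-1\}$. $\mathbf{Q}^\star\in\mathbb{C}^{n\times n}$ is Hermitian positive semi-definite; $\mathbf{H}\in\mathbb{C}^{n\times n}$ arbitrary; $\mathbf{Q}=\mathbf{Q}^\star+\mathbf{H}$. $\mathbf{Q}_r=\mathbf{V}_r\boldsymbol{\Sigma}_r\mathbf{V}_r^\dagger$ with $\boldsymbol{\Sigma}_r$ the top-$r$ singular values of $\mathbf{Q}$ and $\mathbf{V}_r$ the corresponding left singular vectors. $\mathbf{z}^\star$ attains $\max_{\mathbf{z}\in\mathcal{A}_K^n}\mathbf{z}^\dagger\mathbf{Q}^\star\mathbf{z}$ and $\mathbf{z}_r$ attains $\max_{\mathbf{z}\in\mathcal{A}_K^n}\mathbf{z}^\dagger\mathbf{Q}_r\mathbf{z}$. $\|\cdot\|_2$ is the spectral norm. *)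

(* Defs.v *)
From HB Require Import structures.
From mathcomp Require Import all_boot all_order all_algebra.
From mathcomp Require Import all_classical all_reals all_analysis.
From mathcomp Require Import complex.
Set Implicit Arguments. Unset Strict Implicit. Unset Printing Implicit Defensive.
Import Order.TTheory GRing.Theory Num.Theory.
Local Open Scope ring_scope.
Local Open Scope classical_set_scope.

Section Defs.
Variable R : realType.
Local Notation C := R[i].

Definition ctr m n (A : 'M[C]_(m, n)) : 'M[C]_(n, m) := (map_mx Num.conj A)^T.

Definition cmod (x : C) : R := complex.Re `|x|.

Definition vnorm n (x : 'cV[C]_n) : R :=
  Num.sqrt (\sum_(i < n) cmod (x i 0) ^+ 2).

Definition specnorm n (A : 'M[C]_n) : R :=
  sup [set vnorm (A *m x) | x in [set x : 'cV[C]_n | vnorm x = 1]].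

Definition rootsK (K : nat) : set C :=
  [set z | exists2 k : nat, (k < K)%N &
     z = Complex (cos (2 * pi * k%:R / K%:R)) (sin (2 * pi * k%:R / K%:R))].

Definition in_AKn (K n : nat) (z : 'cV[C]_n) : Prop :=
  forall i : 'I_n, rootsK K (z i 0).

Definition qform n (Q : 'M[C]_n) (z : 'cV[C]_n) : C := (ctr z *m Q *m z) 0 0.

Definition is_maximizer (K n : nat) (Q : 'M[C]_n) (z : 'cV[C]_n) : Prop :=
  in_AKn K z /\ forall w, in_AKn K w -> qform Q w <= qform Q z.

Definition hermitian n (A : 'M[C]_n) : Prop := ctr A = A.

Definition psd n (A : 'M[C]_n) : Prop :=
  hermitian A /\ forall x : 'cV[C]_n, 0 <= qform A x.

Definition unitary n (U : 'M[C]_n) : Prop := ctr U *m U = 1%:M.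

Definition is_svd n (Q : 'M[C]_n) (U W : 'M[C]_n) (s : 'rV[R]_n) : Prop :=
  [/\ unitary U, unitary W,
      forall i, 0 <= s 0 i,
      forall i j : 'I_n, (i <= j)%N -> s 0 j <= s 0 i &
      Q = U *m diag_mx (map_mx (fun x => x%:C%C) s) *m ctr W].

(* Q_r = V_r Sigma_r V_r^dagger : V_r = first r columns of U (left singular
   vectors), Sigma_r = diag of the top r singular values. *)
Definition trunc_approx n (r : nat) (U : 'M[C]_n) (s : 'rV[R]_n) : 'M[C]_n :=
  U *m diag_mx (\row_i (if (i < r)%N then (s 0 i)%:C%C else 0)) *m ctr U.

End Defs.

(* Main.v *)
Require Import Defs.
From HB Require Import structures.
From mathcomp Require Import all_boot all_order all_algebra.
From mathcomp Require Import all_classical all_reals all_analysis.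
From mathcomp Require Import complex.
From mathcomp Require Import ring lra.
Import Order.TTheory GRing.Theory Num.Theory.
Local Open Scope ring_scope.

Section Helpers.
Variable R : realType.
Local Notation C := R[i].

Lemma cmodE (x : C) : `|x| = ((cmod x)%:C)%C.
Proof. by rewrite /cmod RRe_real // normr_real. Qed.

Lemma cmod_ge0 (x : C) : 0 <= cmod x.
Proof. by have := normr_ge0 x; rewrite cmodE ler0c. Qed.

Lemma cmodM (x y : C) : cmod (x * y) = cmod x * cmod y.
Proof. by apply: complexI; rewrite rmorphM /= -!cmodE normrM. Qed.

Lemma cmodN (x : C) : cmod (- x) = cmod x.
Proof. by rewrite /cmod normrN. Qed.

Lemma cmod_conj (x : C) : cmod (Num.conj x) = cmod x.
Proof. by rewrite /cmod norm_conjC. Qed.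

Lemma cmodD (x y : C) : cmod (x + y) <= cmod x + cmod y.
Proof. by have := ler_normD x y; rewrite !cmodE -rmorphD lecR. Qed.

Lemma cmod0 : cmod (0 : C) = 0.
Proof. by rewrite /cmod normr0. Qed.

Lemma cmod_sum n (F : 'I_n -> C) : cmod (\sum_i F i) <= \sum_i cmod (F i).
Proof.
elim/big_rec2: _ => [|i x y _ IH]; first by rewrite cmod0.
by apply: le_trans (cmodD _ _) _; rewrite lerD2l.
Qed.

Lemma cmodR (c : R) : cmod (c%:C)%C = `|c|.
Proof. by rewrite /cmod normc_def /= expr0n /= addr0 sqrtr_sqr. Qed.

Lemma Re_le_cmod (x : C) : complex.Re x <= cmod x.
Proof.
rewrite /cmod normc_def /=; apply: le_trans (ler_norm _) _.
by rewrite -sqrtr_sqr ler_sqrt ?addr_ge0 ?sqr_ge0 // lerDl sqr_ge0.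
Qed.

Lemma ReD (x y : C) : complex.Re (x + y) = complex.Re x + complex.Re y.
Proof. by case: x; case: y. Qed.

Lemma ReN (x : C) : complex.Re (- x) = - complex.Re x.
Proof. by case: x. Qed.

Lemma qform_sum n (D : 'M[C]_n) z :
  qform D z = \sum_i Num.conj (z i 0) * (D *m z) i 0.
Proof. by rewrite /qform -mulmxA mxE; apply: eq_bigr => i _; rewrite /ctr !mxE. Qed.

Lemma qformB n (A B : 'M[C]_n) z : qform (A - B) z = qform A z - qform B z.
Proof. by rewrite /qform mulmxBr mulmxBl !mxE. Qed.

Lemma vnormZ n (c : R) (y : 'cV[C]_n) : vnorm ((c%:C)%C *: y) = `|c| * vnorm y.
Proof.
rewrite /vnorm.
under eq_bigr do rewrite mxE cmodM cmodR exprMn real_normK ?num_real //.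
by rewrite -mulr_sumr sqrtrM ?sqr_ge0 // sqrtr_sqr.
Qed.

Lemma real_cs n (a : 'I_n -> R) : (0 < n)%N ->
  (\sum_i a i) ^+ 2 <= n%:R * \sum_i a i ^+ 2.
Proof.
move=> n0.
set S := \sum_i a i; set Q := \sum_i a i ^+ 2.
set m := S / n%:R.
have hn : 0 < (n%:R : R) by rewrite ltr0n.
have hnm : n%:R * m = S by rewrite /m mulrC divfK // gt_eqF.
have h : 0 <= \sum_i (a i - m) ^+ 2 by apply: sumr_ge0 => i _; exact: sqr_ge0.
have e : \sum_i (a i - m) ^+ 2 = Q - (S * m) *+ 2 + n%:R * m ^+ 2.
  under eq_bigr do rewrite sqrrB.
  rewrite big_split /= big_split /= sumrN sumrMnl -mulr_suml sumr_const card_ord.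
  by rewrite mulr_natl.
rewrite e in h.
nra.
Qed.

Lemma vnorm_bound n (D : 'M[C]_n) :
  has_ubound [set vnorm (D *m x) | x in [set x : 'cV[C]_n | vnorm x = 1]].
Proof.
exists (Num.sqrt (\sum_i (\sum_j cmod (D i j)) ^+ 2)).
move=> y [x hx <-].
have hs : \sum_i cmod (x i 0) ^+ 2 = 1.
  have h0 : 0 <= \sum_i cmod (x i 0) ^+ 2 by apply: sumr_ge0 => i _; exact: sqr_ge0.
  by rewrite -(sqr_sqrtr h0); move: hx; rewrite /vnorm => ->; rewrite expr1n.
have hx1 : forall j, cmod (x j 0) <= 1.
  move=> j.
  have : cmod (x j 0) ^+ 2 <= 1.
    rewrite -hs (bigD1 j) //= lerDl; apply: sumr_ge0 => i _; exact: sqr_ge0.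
  have := cmod_ge0 (x j 0); nra.
rewrite /vnorm ler_sqrt; last by apply: sumr_ge0 => i _; exact: sqr_ge0.
apply: ler_sum => i _.
have h1 : cmod ((D *m x) i 0) <= \sum_j cmod (D i j).
  rewrite mxE; apply: le_trans (cmod_sum _ _) _; apply: ler_sum => j _.
  rewrite cmodM; have := cmod_ge0 (D i j); have := cmod_ge0 (x j 0); have := hx1 j.
  nra.
have := cmod_ge0 ((D *m x) i 0); nra.
Qed.

Lemma key n (D : 'M[C]_n) (z : 'cV[C]_n) : (forall i, cmod (z i 0) = 1) ->
  cmod (qform D z) <= n%:R * specnorm D.
Proof.
move=> hz.
have h1 : cmod (qform D z) <= \sum_i cmod ((D *m z) i 0).
  rewrite qform_sum; apply: le_trans (cmod_sum _ _) _; apply: ler_sum => i _.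
  by rewrite cmodM cmod_conj hz mul1r.
apply: le_trans h1 _.
case: n D z hz => [|m] D z hz; first by rewrite big_ord0 mul0r.
set w := D *m z.
pose sn : R := Num.sqrt (m.+1)%:R.
have sn0 : 0 < sn by rewrite sqrtr_gt0 ltr0n.
have snn : sn * sn = (m.+1)%:R by rewrite -expr2 sqr_sqrtr // ler0n.
have vz : vnorm z = sn.
  by rewrite /vnorm; under eq_bigr do rewrite hz expr1n; rewrite sumr_const card_ord.
pose x := ((sn^-1)%:C)%C *: z.
have vx : vnorm x = 1.
  by rewrite /x vnormZ vz ger0_norm ?invr_ge0 ?ltW // mulVf // gt_eqF.
have hS : vnorm (D *m x) <= specnorm D.
  rewrite /specnorm; apply: (ub_le_sup (vnorm_bound _ D)); by exists x.
have hw : vnorm w <= sn * specnorm D.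
  have hn0 : 0 <= sn^-1 by rewrite invr_ge0 ltW.
  move: hS; rewrite /x -scalemxAr vnormZ (ger0_norm hn0) => hS.
  have -> : vnorm w = sn * (sn^-1 * vnorm w) by rewrite mulrA mulfV ?gt_eqF // mul1r.
  rewrite (ler_pM2l sn0); exact: hS.
have hcs : \sum_i cmod (w i 0) <= sn * vnorm w.
  have h0 : 0 <= \sum_i cmod (w i 0) by apply: sumr_ge0 => i _; exact: cmod_ge0.
  rewrite -(ger0_norm h0) -sqrtr_sqr /sn /vnorm -sqrtrM ?ler0n //.
  rewrite ler_sqrt; last by apply: mulr_ge0; [exact: ler0n| apply: sumr_ge0 => i _; exact: sqr_ge0].
  exact: real_cs.
apply: le_trans hcs _.
by rewrite -snn -mulrA ler_pM2l.
Qed.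

End Helpers.

Theorem lemma10 (R : realType) (n K r : nat) (hK : (2 <= K)%N)
    (Qstar H : 'M[R[i]]_n) (U W : 'M[R[i]]_n) (s : 'rV[R]_n)
    (zstar zr : 'cV[R[i]]_n) :
  psd Qstar ->
  is_svd (Qstar + H) U W s ->
  is_maximizer K Qstar zstar ->
  is_maximizer K (trunc_approx r U s) zr ->
  `| qform Qstar zstar - qform Qstar zr |
    <= ((2 * n%:R * specnorm (Qstar - trunc_approx r U s))%:C)%C.
Proof.
move=> _ _ [hzs1 hzs2] [hzr1 hzr2].
set Qr := trunc_approx r U s.
set D := Qstar - Qr.
have hu (z : 'cV[R[i]]_n) : in_AKn K z -> forall i, cmod (z i 0) = 1.
  move=> hz i; have [k _ ->] := hz i.
  by rewrite /cmod normc_def /= cos2Dsin2 sqrtr1.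
have k1 := @key R n D zstar (hu _ hzs1).
have k2 := @key R n D zr (hu _ hzr1).
have hQ : qform Qstar zr <= qform Qstar zstar := hzs2 _ hzr1.
have hR : qform Qr zstar <= qform Qr zr := hzr2 _ hzs1.
have d0 : 0 <= qform Qstar zstar - qform Qstar zr by rewrite subr_ge0.
rewrite ger0_norm // lecE; apply/andP; split.
  by rewrite /= (ger0_Im d0).
have e : qform Qstar zstar - qform Qstar zr =
  qform D zstar - qform D zr + (qform Qr zstar - qform Qr zr).
  rewrite !qformB; ring.
rewrite e !ReD !ReN /=.
move: hR; rewrite lecE => /andP [_ hR].
have r1 := Re_le_cmod _ (qform D zstar).
have r2 := Re_le_cmod _ (- qform D zr); rewrite ReN cmodN in r2.
lra.
Qed.
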